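(* Let $k\ge 4$ and let $w$ be a word over $\{a,b\}$. Let $p$ be an occurrence of $u=ba^{k-1}$ and $q$ an occurrence of $v=b^{k-1}a$ in $w$ that are consecutive ($p$ before $q$), with sets of forbidden local positions $F_p$ and $F_q$, and suppose $|F_p|=|F_q|$. Suppose $F_q=\{0,i,i+1,\dots,k-2\}$ for some $2\le i\le k-2$, and suppose $F_p$ is a single cyclic block, i.e. $F_p=\{c,c+1,\dots,c+m-1\}$ with all elements taken modulo $k$, for some $c\in\{0,\dots,k-1\}$ and $m\ge 1$. Then either $F_p=\{0,1\}\cup\{i+2,i+3,\dots,k-1\}$ or $F_p=\{0\}\cup\{i+1,i+2,\dots,k-1\}$.
   Context: $\Sigma=\{a,b\}$. $S_k=\left(\Sigma^k\setminus\{ba^{k-1},b^{k-1}a\}\right)\cup\left(\Sigma^{k-1}\setminus\{a^{k-1},b^{k-1}\}\right)$, $u=ba^{k-1}$, $v=b^{k-1}a$. $\mathit{Pref}(S^* )$ denotes the set of prefixes of words in $S^*$. For $w=w_1\cdots w_n$, $w[i..j]=w_i\cdots w_j$ (empty if $i>j$). A position $j$, $0\le j\le n-1$, is forbidden in $w$ if $w[j+1..n]\notin\mathit{Pref}(S_k^* )$. An occurrence of $p\in\{u,v\}$ in $w$ is an index $s$ with $w[s+1..s+k]=p$; local position $i\in\{0,\dots,k-1\}$ is the position $s+i$ of $w$, and it is forbidden in the occurrence if $s+i$ is forbidden in $w$. Two occurrences of words from $\{u,v\}$ starting at $s<t$ overlap if $t<s+k$; they are consecutive if either they overlap or they are the only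 occurrences of $u$ or $v$ lying inside the factor $w[s+1..t+k]$. *)

(* Defs.v *)
From mathcomp Require Import all_boot.
Set Implicit Arguments. Unset Strict Implicit. Unset Printing Implicit Defensive.

Definition la : bool := false.
Definition lb : bool := true.

Definition uw (k : nat) : seq bool := lb :: nseq k.-1 la.
Definition vw (k : nat) : seq bool := rcons (nseq k.-1 lb) la.

Definition inSk (k : nat) (x : seq bool) : bool :=
  ((size x == k) && (x != uw k) && (x != vw k))
  || ((size x == k.-1) && (x != nseq k.-1 la) && (x != nseq k.-1 lb)).

Definition in_star (S : pred (seq bool)) (w : seq bool) : Prop :=
  exists ws : seq (seq bool), all S ws /\ flatten ws = w.

Definition in_pref (S : pred (seq bool)) (w : seq bool) : Prop :=
  exists z : seq bool, in_star S (w ++ z).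

(* position j (0 <= j <= n-1) is forbidden in w iff w[j+1..n] = drop j w
   is not in Pref(S_k^* ) *)
Definition forbidden (k : nat) (w : seq bool) (j : nat) : Prop :=
  j < size w /\ ~ in_pref (inSk k) (drop j w).

(* occurrence of p at index s : w[s+1..s+k] = p (with k = size p) *)
Definition occ (w p : seq bool) (s : nat) : Prop :=
  take (size p) (drop s w) = p /\ s + size p <= size w.

Definition consecutive (k : nat) (w : seq bool) (s t : nat) : Prop :=
  s < t /\
  (t < s + k \/
   (forall r, s <= r -> r + k <= t + k ->
      (occ w (uw k) r \/ occ w (vw k) r) -> r = s \/ r = t)).

(* Main.v *)
Require Import Defs.
From mathcomp Require Import all_boot.
From Stdlib Require Import Lia Classical.

Ltac natify := repeat match goal with
 | H : is_true (leq _ _) |- _ => move/leP: H => H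
 | |- is_true (leq _ _) => apply/leP
 | |- _ /\ _ => split
 end.
Ltac slia := natify; unfold addn, subn, muln in *; lia.

Ltac bdestr := repeat match goal with
   | H : ~ is_true _ |- _ => move/negP: H => H
   | H : is_true (_ || _) |- _ => case/orP: H => H
   | H : is_true (_ && _) |- _ => let H1 := fresh "H" in case/andP: H => H1 H
   | H : is_true (~~ (_ || _)) |- _ => rewrite negb_or in H
   | H : is_true (~~ (_ && _)) |- _ => rewrite negb_and in H
   | H : is_true (~~ (_ <= _)) |- _ => rewrite -ltnNge in H
   | H : is_true (~~ ~~ _) |- _ => rewrite negbK in H
   | H : is_true (_ == _) |- _ => move/eqP: H => H
   | H : is_true (~~ (_ == _)) |- _ => move/eqP: H => H
  end.

Ltac blia := bdestr; repeat match goal with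
  | |- context [?a <= ?b] => case: (leqP a b) => ?
  | |- context [?a == ?b] => case: eqP => ?
  end; bdestr; try done; exfalso; slia.

Lemma count_iota_T (P : pred nat) a n :
  (forall x, a <= x -> x < a + n -> P x) -> count P (iota a n) = n.
Proof.
move=> H; rewrite (eq_in_count (a2 := predT)) ?count_predT ?size_iota // => x.
by rewrite mem_iota => /andP[H1 H2]; rewrite H.
Qed.

Lemma count_iota_F (P : pred nat) a n :
  (forall x, a <= x -> x < a + n -> ~~ P x) -> count P (iota a n) = 0.
Proof.
move=> H; rewrite (eq_in_count (a2 := pred0)) ?count_pred0 // => x.
by rewrite mem_iota => /andP[H1 H2]; apply/negbTE/H.
Qed.

Lemma count_iota_split (P : pred nat) a n1 n2 :
  count P (iota a (n1 + n2)) = count P (iota a n1) + count P (iota (a + n1) n2).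
Proof. by rewrite iotaD count_cat. Qed.

Lemma card_set_ord k (P : pred nat) :
  #|[set x : 'I_k | P (val x)]| = count P (iota 0 k).
Proof.
rewrite -sum1_card.
rewrite (_ : count P (iota 0 k) = \sum_(0 <= j < k | P j) 1); last first.
  by rewrite sum1_count /index_iota subn0.
rewrite big_mkord. apply: eq_bigl => x. by rewrite inE.
Qed.

Lemma comb k i c m y (fp fq : nat -> bool) :
  4 <= k -> 2 <= i -> i <= k - 2 -> c < k -> m = k - i -> y < k ->
  (forall x, x < k -> fp x = ((c <= x) && (x < c + m)) || (x + k < c + m)) ->
  (forall z, fq z = (z == 0) || ((i <= z) && (z <= k - 2))) ->
  (forall x, 0 < x -> x < k -> fp x -> fq ((y + x) %% k)) ->
  (fp 0 -> fp (k - 1)) ->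
  (forall x, 1 < x -> x < k -> fp x.-1 -> ~~ fp x -> ~~ fq ((y + x) %% k)) ->
  (forall x, x < k -> fp x = (x <= 1) || (i + 2 <= x)) \/
  (forall x, x < k -> fp x = (x == 0) || (i + 1 <= x)).
Proof.
move=> Hk Hi Hik Hc Hm Hy Hfp Hfq HA HB HC.
have Hk0 : 0 < k by slia.
have Hrun : forall n z0, z0 < k -> (forall j, j <= n -> fq ((z0 + j) %% k)) ->
    (z0 = 0 /\ n = 0) \/ (i <= z0 /\ z0 + n <= k - 2).
  elim=> [|n IH] z0 Hz0 H.
  - have := H 0 (leqnn 0). rewrite addn0 modn_small // Hfq => Hq; bdestr.
    + by left.
    + right; split => //; slia.
  - have [[E1 E2]|[E1 E2]] := IH z0 Hz0 (fun j Hj => H j (leqW Hj)).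
    + exfalso. have := H 1 ltac:(slia). rewrite E1 add0n modn_small; last slia.
      rewrite Hfq => Hq; bdestr; slia.
    + right. have := H n.+1 (leqnn _). rewrite modn_small; last slia.
      rewrite Hfq => Hq; bdestr; slia.
have Hmod : forall a b, (a %% k + b) %% k = (a + b) %% k by move=> a b; apply: modnDml.
have Hfp0 : fp 0.
  apply/negP => Hn.
  have [Hc0 Hcm] : 0 < c /\ c + m <= k.
    move: Hn; rewrite Hfp // => Hn; bdestr; split; slia.
  have := Hrun m.-1 ((y + c) %% k) (ltn_pmod _ Hk0).
  case.
  - move=> j Hj; rewrite Hmod -addnA; apply: HA; [slia|slia|]. rewrite Hfp; [blia|slia].
  - move=> [_ ?]; slia.
  - move=> [? ?]; slia.
have Hb : k < c + m.
  case: (leqP (c + m) k) => // Hcm.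
  have := HB Hfp0. move: Hfp0. rewrite !Hfp; [|slia|slia] => H1 H2; bdestr; slia.
have Hfpc : forall x, x < k -> fp x = (c <= x) || (x < c + m - k).
  move=> x Hx; rewrite Hfp //; blia.
have : (c + m - k = 1) \/ (c + m - k = 2) \/ (3 <= c + m - k)%coq_nat by slia.
case=> [Hb1|[Hb2|/leP Hb3]].
- right => x Hx. rewrite Hfpc //; blia.
- left => x Hx. rewrite Hfpc //; blia.
- exfalso. set b := c + m - k in Hb3 Hfpc.
  have H1 := HC b ltac:(slia) ltac:(slia).
  have {}H1 : ~~ fq ((y + b) %% k).
    apply: H1; rewrite Hfpc; [blia|slia|blia|slia].
  have := Hrun (b - 2) ((y + 1) %% k) (ltn_pmod _ Hk0).
  case.
  - move=> j Hj; rewrite Hmod -addnA; apply: HA; [slia|slia|]. rewrite Hfpc; [blia|slia].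
  - move=> [_ ?]; slia.
  move=> [Hz1 Hz2].
  have Hz : (y + 1) %% k = y + 1.
    case: (ltnP (y + 1) k) => h; first by rewrite modn_small.
    rewrite (_ : y + 1 = k) ?modnn in Hz1; slia.
  rewrite Hz in Hz1 Hz2.
  move: H1. rewrite (_ : y + b = (y + 1) + (b - 1)); last slia.
  rewrite -Hmod Hz modn_small; last slia.
  rewrite Hfq => H1.
  have Hyb : y + b = k - 1 by bdestr; slia.
  have := HA c ltac:(slia) ltac:(slia).
  rewrite Hfpc; last slia. move=> /(_ ltac:(blia)).
  rewrite (_ : y + c = k + (i - 1)); last slia.
  rewrite modnDl modn_small; last slia.
  rewrite Hfq => H2; bdestr; slia.
Qed.

Lemma pref_back k (w : seq bool) j L :
  inSk k (take L (drop j w)) -> in_pref (inSk k) (drop (L + j) w) ->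
  in_pref (inSk k) (drop j w).
Proof.
move=> HS [z [ws [Hall Hfl]]]. exists z, (take L (drop j w) :: ws). split.
  by rewrite /= HS Hall.
by rewrite /= Hfl catA -drop_drop cat_take_drop.
Qed.

Lemma pref_fwd k (w : seq bool) j : 1 < k -> k <= size (drop j w) ->
  in_pref (inSk k) (drop j w) ->
  (inSk k (take k.-1 (drop j w)) /\ in_pref (inSk k) (drop (k.-1 + j) w)) \/
  (inSk k (take k (drop j w)) /\ in_pref (inSk k) (drop (k + j) w)).
Proof.
move=> Hk Hsz [z [ws [Hall Hfl]]].
case: ws Hall Hfl => [|y ws] /=.
  move=> _ Hfl. have := congr1 size Hfl. rewrite size_cat /=. slia.
move=> /andP[Hy Hall] Hfl.
have Hsy : size y = k \/ size y = k.-1.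
  move: Hy; rewrite /inSk => /orP[/andP[/andP[/eqP -> _] _]|/andP[/andP[/eqP -> _] _]]; auto.
have Hle : size y <= size (drop j w) by case: Hsy => ->; slia.
have Ey : y = take (size y) (drop j w).
  by rewrite -(takel_cat z Hle) -Hfl take_size_cat.
have Ed : flatten ws = drop (size y) (drop j w) ++ z.
  rewrite -(drop_size_cat (flatten ws) (erefl (size y))) Hfl drop_cat.
  case: ltnP => H //.
  have -> : size y = size (drop j w) by apply/eqP; rewrite eqn_leq Hle H.
  by rewrite subnn drop0 drop_size.
have Hp : in_pref (inSk k) (drop (size y + j) w).
  rewrite -drop_drop. exists z, ws. by split.
case: Hsy => Hs; [right|left]; rewrite Hs in Ey Hp; split => //; by rewrite -Ey.
Qed.

Lemma fpchar k c m x : c < k -> m <= k -> x < k ->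
  has (fun j => x == (c + j) %% k) (iota 0 m) =
  ((c <= x) && (x < c + m)) || (x + k < c + m).
Proof.
move=> Hc Hm Hx. have Hk : 0 < k by slia.
apply/hasP/idP.
- move=> [j]; rewrite mem_iota => /andP[_ Hj] /eqP ->.
  case: (ltnP (c + j) k) => h.
    rewrite modn_small //. apply/orP; left; apply/andP; split; slia.
  rewrite -(subnKC h) modnDl modn_small; last slia.
  apply/orP; right; slia.
- move=> H; bdestr.
  + exists (x - c); first by rewrite mem_iota; apply/andP; split; slia.
    rewrite subnKC // modn_small //.
  + exists (x + k - c); first by rewrite mem_iota; apply/andP; split; slia.
    rewrite subnKC; last slia. by rewrite addnC modnDl modn_small.
Qed.

Lemma fpall k c m x : c < k -> k <= m -> x < k ->
  has (fun j => x == (c + j) %% k) (iota 0 m).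
Proof.
move=> Hc Hm Hx. apply/hasP.
case: (leqP c x) => h.
- exists (x - c); first by rewrite mem_iota; apply/andP; split; slia.
  rewrite subnKC // modn_small //.
- exists (x + k - c); first by rewrite mem_iota; apply/andP; split; slia.
  rewrite subnKC; last slia. by rewrite addnC modnDl modn_small.
Qed.

Theorem lemma8 (k : nat) (w : seq bool) (s t : nat)
    (Fp Fq : {set 'I_k}) (i c m : nat) :
  4 <= k ->
  occ w (uw k) s ->
  occ w (vw k) t ->
  consecutive k w s t ->
  (forall x : 'I_k, x \in Fp <-> forbidden k w (s + x)) ->
  (forall x : 'I_k, x \in Fq <-> forbidden k w (t + x)) ->
  #|Fp| = #|Fq| ->
  2 <= i -> i <= k - 2 ->
  Fq = [set x : 'I_k | (val x == 0) || ((i <= val x) && (val x <= k - 2))] ->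
  c < k -> 1 <= m ->
  Fp = [set x : 'I_k | has (fun j => val x == (c + j) %% k) (iota 0 m)] ->
  Fp = [set x : 'I_k | (val x <= 1) || (i + 2 <= val x)] \/
  Fp = [set x : 'I_k | (val x == 0) || (i + 1 <= val x)].
Proof.
move=> Hk Hocu Hocv Hcons HFp HFq Hcard Hi2 Hik HFqE Hc Hm HFpE.
have Hk0 : 0 < k by slia.
set fqn := fun z : nat => (z == 0) || ((i <= z) && (z <= k - 2)).
set fpn := fun x : nat => has (fun j => x == (c + j) %% k) (iota 0 m).
have HPn : forall x, x < k -> (fpn x <-> forbidden k w (s + x)).
  move=> x Hx; have := HFp (Ordinal Hx); by rewrite HFpE inE.
have HQn : forall x, x < k -> (fqn x <-> forbidden k w (t + x)).
  move=> x Hx; have := HFq (Ordinal Hx); by rewrite HFqE inE.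
have cFq : #|Fq| = k - i.
  rewrite HFqE (card_set_ord k fqn).
  have -> : iota 0 k = iota 0 (1 + ((i - 1) + ((k - 1 - i) + 1))) by congr iota; slia.
  rewrite !count_iota_split.
  rewrite (@count_iota_T _ 0 1); last by move=> x H1 H2; rewrite /fqn; blia.
  rewrite (@count_iota_F _ (0 + 1) (i - 1)); last by move=> x H1 H2; rewrite /fqn; blia.
  rewrite (@count_iota_T _ (0 + 1 + (i - 1)) (k - 1 - i)); last by move=> x H1 H2; rewrite /fqn; blia.
  rewrite (@count_iota_F _ (0 + 1 + (i - 1) + (k - 1 - i)) 1); last by move=> x H1 H2; rewrite /fqn; blia.
  slia.
have Hmk' : m <= k.
  case: (leqP m k) => // Hmk.
  have : #|Fp| = k.
    rewrite HFpE (card_set_ord k fpn) count_iota_T // => x _ Hx.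
    apply: fpall => //; slia.
  slia.
have Hfpc : forall x, x < k -> fpn x = ((c <= x) && (x < c + m)) || (x + k < c + m).
  move=> x Hx; exact: fpchar.
have Hmk : m = k - i.
  rewrite -cFq -Hcard HFpE (card_set_ord k fpn).
  rewrite (eq_in_count (a2 := fun x => ((c <= x) && (x < c + m)) || (x + k < c + m))); last first.
    by move=> x; rewrite mem_iota => /andP[_ Hx]; apply: Hfpc.
  case: (leqP (c + m) k) => Hcm.
  - have -> : iota 0 k = iota 0 (c + (m + (k - c - m))) by congr iota; slia.
    rewrite !count_iota_split.
    rewrite (@count_iota_F _ 0 c); last by move=> x H1 H2; blia.
    rewrite (@count_iota_T _ (0 + c) m); last by move=> x H1 H2; blia.
    rewrite (@count_iota_F _ (0 + c + m) (k - c - m)); last by move=> x H1 H2; blia.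
    slia.
  - have -> : iota 0 k = iota 0 ((c + m - k) + ((k - m) + (k - c))) by congr iota; slia.
    rewrite !count_iota_split.
    rewrite (@count_iota_T _ 0 (c + m - k)); last by move=> x H1 H2; blia.
    rewrite (@count_iota_F _ (0 + (c + m - k)) (k - m)); last by move=> x H1 H2; blia.
    rewrite (@count_iota_T _ (0 + (c + m - k) + (k - m)) (k - c)); last by move=> x H1 H2; blia.
    slia.
have Hus : size (uw k) = k by rewrite /uw /= size_nseq prednK.
have Hvs : size (vw k) = k by rewrite /vw size_rcons size_nseq prednK.
case: Hocu; rewrite Hus => Hu Hsu.
case: Hocv; rewrite Hvs => Hv Htv.
have Hst0 : s < t by case: Hcons.
have Hst : s + k <= t.
  case: (leqP (s + k) t) => // Hlt. exfalso.
  have E1 : nth false w t = true.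
    rewrite -(addn0 t) -nth_drop -(@nth_take k) // Hv /vw nth_rcons size_nseq.
    have -> : 0 < k.-1 by slia.
    by rewrite nth_nseq; have -> : 0 < k.-1 by slia.
  have E2 : nth false (drop s w) (t - s) = false.
    rewrite -(@nth_take k); last slia. rewrite Hu /uw.
    case E: (t - s) => [|q]; first slia.
    by rewrite /= nth_nseq; case: ifP.
  by rewrite nth_drop subnKC ?E1 // ltnW in E2.
set P := fun j => in_pref (inSk k) (drop j w).
have Hgapw : forall j, s < j -> j < t -> inSk k (take k (drop j w)).
  move=> j Hsj Hjt.
  have Hsz : size (take k (drop j w)) = k by rewrite size_takel // size_drop; slia.
  have Hocc : forall p, p = uw k \/ p = vw k -> take k (drop j w) = p -> False.
    move=> p Hp E. case: Hcons => _ [Hlt|Hall]; first slia.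
    have := Hall j (ltnW Hsj) ltac:(slia).
    case.
    + case: Hp => Hp; subst p; [left|right]; split; rewrite ?Hus ?Hvs //; slia.
    + move=> h; slia.
    + move=> h; slia.
  rewrite /inSk Hsz eqxx /=. apply/orP; left; apply/andP; split; apply/eqP => E.
  - exact: (Hocc (uw k) (or_introl erefl) E).
  - exact: (Hocc (vw k) (or_intror erefl) E).
have Hg1 : forall j, s < j -> j < t -> P (k + j) -> P j.
  move=> j Hsj Hjt HP. apply: (@pref_back k w j k) => //. exact: Hgapw.
have Hg2 : forall j, s < j -> j < t -> P j -> ~ P (k + j) -> P (k.-1 + j).
  move=> j Hsj Hjt HP HnP.
  have := @pref_fwd k w j ltac:(slia) ltac:(rewrite size_drop; slia) HP.
  by case=> [[]|[]].
have Hbs : P (k.-1 + s) -> P s.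
  apply: pref_back.
  have -> : take k.-1 (drop s w) = take k.-1 (uw k).
    by rewrite -Hu take_takel // leq_pred.
  have [n En] : exists n, k = n.+4 by exists (k - 4); slia.
  rewrite En /uw /inSk /= size_takel /=; last by rewrite size_nseq.
  by rewrite eqxx orbT.
have Hprop : forall q j, s < j -> j + q * k < t + k -> forbidden k w j ->
    forbidden k w (j + q * k).
  elim=> [|q IH] j Hsj Hjq Hf; first by rewrite mul0n addn0.
  rewrite mulSn addnA. rewrite mulSn addnA in Hjq.
  apply: IH; [slia | done | ].
  case: Hf => Hjs HnP. split; first slia.
  move=> HP; apply: HnP. apply: Hg1; [done | slia | by rewrite addnC].
have Hloss : forall x, 1 < x -> x < k -> forbidden k w (s + x.-1) ->
    ~ forbidden k w (s + x) ->
    forall q, s + x + q * k < t + k -> ~ forbidden k w (s + x + q * k).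
  move=> x Hx1 Hxk Hf1 Hnf.
  elim=> [|q IH] Hq; first by rewrite mul0n addn0.
  have Hq' : s + x + q * k < t + k by rewrite mulSn in Hq; slia.
  have IHq := IH Hq'.
  move=> [Hsize HnP].
  have Pj : P (s + x + q * k).
    apply: NNPP => HnPj; apply: IHq; split; [slia | done].
  have := Hg2 (s + x + q * k) ltac:(slia) ltac:(slia) Pj.
  have Eq1 : k + (s + x + q * k) = s + x + q.+1 * k by rewrite mulSn; slia.
  rewrite Eq1 => /(_ HnP).
  have := Hprop q.+1 (s + x.-1) ltac:(slia) ltac:(rewrite mulSn; slia) Hf1.
  have -> : s + x.-1 + q.+1 * k = k.-1 + (s + x + q * k) by rewrite mulSn; slia.
  by case.
set d := t - s.
set r0 := d %% k.
set y := (k - r0) %% k.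
have Hy : y < k by apply: ltn_pmod.
have Hland : forall x, x < k -> exists q, s + x + q * k = t + (y + x) %% k.
  move=> x Hx.
  have Hd := divn_eq d k.
  have Hr0 : r0 < k by apply: ltn_pmod.
  move: Hd; rewrite -/r0; move: (d %/ k) => Q Hd.
  case: (posnP r0) => Hr0z.
  - rewrite /y Hr0z subn0 modnn add0n modn_small //. exists Q. rewrite /d in Hd. slia.
  - have Ey : y = k - r0 by rewrite /y modn_small //; slia.
    rewrite Ey. case: (leqP r0 x) => Hxr.
    + rewrite (_ : k - r0 + x = k + (x - r0)); last slia.
      rewrite modnDl modn_small; last slia.
      exists Q. rewrite /d in Hd. slia.
    + rewrite modn_small; last slia.
      exists Q.+1. rewrite mulSn. rewrite /d in Hd. slia.
have HA : forall x, 0 < x -> x < k -> fpn x -> fqn ((y + x) %% k).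
  move=> x Hx0 Hxk Hfx.
  have Hf := (HPn x Hxk).1 Hfx.
  have [q Eq] := Hland x Hxk.
  have Hz : (y + x) %% k < k by apply: ltn_pmod.
  apply/(HQn _ Hz).2. rewrite -Eq. apply: Hprop => //; [slia | rewrite Eq; slia].
have HB : fpn 0 -> fpn (k - 1).
  move=> H0. apply: (HPn (k - 1) ltac:(slia)).2.
  have [Hsz HnP] := (HPn 0 Hk0).1 H0.
  split; first slia.
  move=> HP; apply: HnP. rewrite addn0. apply: Hbs.
  by rewrite (_ : k.-1 + s = s + (k - 1)); last slia.
have HC : forall x, 1 < x -> x < k -> fpn x.-1 -> ~~ fpn x -> ~~ fqn ((y + x) %% k).
  move=> x H1 H2 Hf1 Hnf. apply/negP => Hq.
  have [q Eq] := Hland x H2.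
  have Hz : (y + x) %% k < k by apply: ltn_pmod.
  have Hfl := (HQn _ Hz).1 Hq. rewrite -Eq in Hfl.
  apply: (Hloss x H1 H2 _ _ q _ Hfl).
  - exact: (HPn x.-1 ltac:(slia)).1.
  - move/(HPn x H2).2 => H. by rewrite H in Hnf.
  - rewrite Eq; slia.
have [H1|H2] := @comb k i c m y fpn fqn Hk Hi2 Hik Hc Hmk Hy Hfpc (fun _ => erefl) HA HB HC.
- left; apply/setP => x; rewrite HFpE !inE; exact: H1 (ltn_ord x).
- right; apply/setP => x; rewrite HFpE !inE; exact: H2 (ltn_ord x).
Qed.
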